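(* Let $N\ge1$, $H=(H_1,\dots,H_N)\in]0,1[^N$, $a\in\mathbb{R}^N\setminus\{(0,\dots,0)\}$, let $S^H(a)$ be the mixed sub-fractional Brownian motion with parameters $N,a,H$, and for $0\le u<v\le s<t$ let $C_{u,v,s,t}=\mathrm{Cov}\big(S^H_v(a)-S^H_u(a),\,S^H_t(a)-S^H_s(a)\big)$. Then for all $0\le u<v\le s<t$: (1) $C_{u,v,s,t}=0$ if $H_i=1/2$ for every $i\in\{1,\dots,N\}$; (2) $C_{u,v,s,t}>0$ if $H_i>1/2$ for every $i\in\{1,\dots,N\}$; (3) $C_{u,v,s,t}<0$ if $H_i<1/2$ for every $i\in\{1,\dots,N\}$.
   Context: Let $(\Omega,\mathcal F,\mathbb P)$ be a probability space. For $K\in]0,1[$, a fractional Brownian motion on $\mathbb{R}$ with Hurst index $K$ is a continuous centered Gaussian process $\{B^K(t),t\in\mathbb{R}\}$ with $\mathrm{Cov}(B^K(t),B^K(s))=\frac12(|t|^{2K}+|s|^{2K}-|t-s|^{2K})$. The sub-fractional Brownian motion (sfBm) of index $K$ is $\xi^K_t=(B^K_t+B^K_{-t})/\sqrt2$, $t\ge0$; it is a continuous centered Gaussian process with $\mathrm{Cov}(\xi^K_t,\xi^K_s)=s^{2K}+t^{2K}-\frac12\big((s+t)^{2K}+|t-s|^{2K}\big)$. For $N\ge1$, $H\in]0,1[^N$, $a\in\mathbb{R}^N\setminus\{0\}$, the mixed sub-fractional Brownian motion (msfBm) is $S^H_t(a)=\sum_{i=1}^N a_i\xi^{H_i}(t)$,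 $t\ge0$, where $\xi^{H_1},\dots,\xi^{H_N}$ are independent sfBms with indices $H_1,\dots,H_N$. *)

(* Defs.v *)
From HB Require Import structures.
From mathcomp Require Import all_boot all_order all_algebra.
From mathcomp Require Import all_classical all_reals all_analysis.
Set Implicit Arguments. Unset Strict Implicit. Unset Printing Implicit Defensive.
Import Order.TTheory GRing.Theory Num.Theory.
Import numFieldNormedType.Exports.
Local Open Scope classical_set_scope.
Local Open Scope ring_scope.

Section defs.
Context {d : measure_display} {T : measurableType d} {R : realType}.
Variable P : probability T R.

Definition gaussian_rv (X : T -> R) : Prop :=
  (exists m s : R, s != 0 /\
     forall A : set R, measurable A -> P (X @^-1` A) = normal_prob m s A)
  \/ (exists m : R, forall A : set R, measurable A -> P (X @^-1` A) = \d_m A).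

Definition gaussian_process (X : R -> T -> R) : Prop :=
  forall (ts cs : seq R), all (fun t => 0 <= t) ts -> size cs = size ts ->
    gaussian_rv (fun w => \sum_(j < size ts) nth 0 cs j * X (nth 0 ts j) w).

Definition sfbm_cov (K s t : R) : R :=
  s `^ (2 * K) + t `^ (2 * K)
  - 2^-1 * ((s + t) `^ (2 * K) + `|t - s| `^ (2 * K)).

Definition is_sfbm (K : R) (xi : R -> {RV P >-> R}) : Prop :=
  [/\ forall w, {within [set t : R | 0 <= t], continuous (fun t => xi t w)},
      gaussian_process (fun t => xi t : T -> R),
      forall t, 0 <= t -> (xi t : T -> R) \in Lfun P 2%:E,
      forall t, 0 <= t -> ('E_P[xi t])%E = 0%E
    & forall s t, 0 <= s -> 0 <= t ->
        covariance P (xi s) (xi t) = (sfbm_cov K s t)%:E].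

Definition independent_processes (N : nat) (X : 'I_N -> R -> T -> R) : Prop :=
  forall (ts : 'I_N -> seq R) (B : 'I_N -> nat -> set R),
    (forall i, all (fun t => 0 <= t) (ts i)) ->
    (forall i j, measurable (B i j)) ->
    fine (P (\bigcap_(i in [set: 'I_N]) \bigcap_(j in `I_(size (ts i)))
               (X i (nth 0 (ts i) j) @^-1` B i j)))
    = \prod_(i < N)
        fine (P (\bigcap_(j in `I_(size (ts i))) (X i (nth 0 (ts i) j) @^-1` B i j))).

Definition msfbm (N : nat) (a : 'I_N -> R) (xi : 'I_N -> R -> {RV P >-> R})
  (t : R) : T -> R := fun w => \sum_(i < N) a i * xi i t w.

Definition msfbm_incr_cov (N : nat) (a : 'I_N -> R)
  (xi : 'I_N -> R -> {RV P >-> R}) (u v s t : R) : \bar R :=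
  covariance P (msfbm a xi v \- msfbm a xi u) (msfbm a xi t \- msfbm a xi s).

End defs.

Arguments gaussian_rv {d T R} P X.
Arguments gaussian_process {d T R} P X.
Arguments is_sfbm {d T R} P K xi.
Arguments independent_processes {d T R} P {N} X.
Arguments msfbm {d T R} P {N} a xi t _.
Arguments msfbm_incr_cov {d T R} P {N} a xi u v s t.

(* Main.v *)
Require Import Defs.
From HB Require Import structures.
From mathcomp Require Import all_boot all_order all_algebra.
From mathcomp Require Import all_classical all_reals all_analysis.
From mathcomp Require Import measurable_realfun.
From mathcomp Require Import ring lra.
Set Implicit Arguments. Unset Strict Implicit. Unset Printing Implicit Defensive.
Import Order.TTheory GRing.Theory Num.Theory.
Import numFieldNormedType.Exports.
Local Open Scope classical_set_scope.
Local Open Scope ring_scope.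

Section indep.
Context d (T : measurableType d) (R : realType) (P : probability T R).
Local Open Scope ereal_scope.

Lemma indep_expectationM (X Y : {RV P >-> R}) :
  (forall A B, measurable A -> measurable B ->
     P (X @^-1` A `&` Y @^-1` B) = P (X @^-1` A) * P (Y @^-1` B)) ->
  (X : T -> R) \in Lfun P 1 -> (Y : T -> R) \in Lfun P 1 ->
  (X \* Y)%R \in Lfun P 1 ->
  'E_P[X \* Y] = 'E_P[X] * 'E_P[Y].
Proof.
move=> ind X1 Y1 XY1.
have mZ : measurable_fun [set: T] (fun w => (X w, Y w)).
  by apply: measurable_fun_pair.
pose Z : {mfun T >-> (R * R)%type} := HB.pack (fun w => (X w, Y w))
  (isMeasurableFun.Build _ _ _ _ _ mZ).


have eqm : forall S, measurable S -> ((distribution P X) \x (distribution P Y)) S = distribution P Z S.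
  apply: product_measure_unique => A B mA mB.
  exact: (ind A B mA mB).
pose f := fun z : R * R => (z.1 * z.2)%:E.
have mf : measurable_fun setT f.
  apply/measurable_EFinP; apply: measurable_funM.
    exact: measurable_fst.
  exact: measurable_snd.
have intP : P.-integrable [set: T] (f \o Z).
  by move/Lfun1_integrable : XY1.
have intZ : (distribution P Z).-integrable setT f.
  exact: integrable_pushforward.
have intXY : ((distribution P X) \x (distribution P Y)).-integrable setT f.
  apply/integrableP; split => //.
  rewrite (eq_measure_integral (distribution P Z)); last first.
    by move=> S mS _; exact: eqm.
  by case/integrableP : intZ.
have intX : (distribution P X).-integrable [set: R] EFin.
  apply: integrable_pushforward => //.
  by move/Lfun1_integrable : X1.
have intY : (distribution P Y).-integrable [set: R] EFin.
  apply: integrable_pushforward => //.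
  by move/Lfun1_integrable : Y1.
have EX : 'E_P[X] = \int[(distribution P X)]_x x%:E.
  by rewrite unlock integral_distribution //; move/Lfun1_integrable : X1.
have EY : 'E_P[Y] = \int[(distribution P Y)]_x x%:E.
  by rewrite unlock integral_distribution //; move/Lfun1_integrable : Y1.
have -> : 'E_P[X \* Y] = \int[distribution P Z]_z f z.
  by rewrite unlock integral_distribution.
rewrite (eq_measure_integral ((distribution P X) \x (distribution P Y))); last by move=> S mS _; exact/esym/eqm.
rewrite -integral12_prod_meas1 //.
rewrite /fubini_F /f /=.
rewrite (_ : \int[(distribution P X)]_x _ = \int[(distribution P X)]_x (x%:E * 'E_P[Y])); last first.
  apply: eq_integral => x _; rewrite EY -integralZl //;
    try (by apply: eq_integral => y _; rewrite EFinM); exact: intY.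
have EYf : 'E_P[Y] \is a fin_num by exact: expectation_fin_num.
rewrite -(fineK EYf).
under eq_integral => x _ do rewrite muleC.
rewrite integralZl //; try exact: intX. by rewrite -EX muleC.
Qed.
End indep.

Section realpart.
Variable R : realType.

Lemma is_derive_shiftF (F : R -> R) (c x d : R) :
  is_derive (x + c) 1 F d -> is_derive x 1 (fun y => F (y + c)) d.
Proof.
move=> [dF vF].
have E : (fun h : R => h^-1 *: (((fun y => F (y + c)) \o shift x) (h *: 1)
           - F (x + c))) =
         (fun h => h^-1 *: ((F \o shift (x + c)) (h *: 1) - F (x + c))).
  by apply/funext => h /=; rewrite addrA.
split; first by rewrite /derivable E.
by rewrite /derive E.
Qed.

Lemma mvt0 (g dg : R -> R) (a h : R) : 0 < a -> 0 < h ->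
  (forall x : R, 0 < x -> is_derive x 1 g (dg x)) ->
  exists2 c, a < c & g (a + h) - g a = dg c * h.
Proof.
move=> a0 h0 dg0.
have ah : a < a + h by rewrite ltrDl.
have D : forall x, x \in `]a, a + h[ -> is_derive x 1 g (dg x).
  by move=> x xI; apply: dg0; apply: lt_trans a0 _; rewrite (itvP xI).
have cont : {within `[a, a + h], continuous g}.
  apply: derivable_within_continuous => x xI.
  have : 0 < x by apply: lt_le_trans a0 _; rewrite (itvP xI).
  by move/dg0 => [].
have [c cI ->] := MVT ah D cont.
by exists c; [rewrite (itvP cI) | rewrite addrAC subrr add0r].
Qed.

Lemma mvt_ge0 (g dg : R -> R) (a h : R) : 0 <= a -> 0 < h ->
  (forall x : R, 0 < x -> is_derive x 1 g (dg x)) ->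
  g x @[x --> a^'+] --> g a ->
  exists2 c, a < c & g (a + h) - g a = dg c * h.
Proof.
move=> a0 h0 dg0 ga.
have ah : a < a + h by rewrite ltrDl.
have D : forall x, x \in `]a, a + h[ -> is_derive x 1 g (dg x).
  by move=> x xI; apply: dg0; apply: le_lt_trans a0 _; rewrite (itvP xI).
have cont : {within `[a, a + h], continuous g}.
apply/continuous_within_itvP => //; split => //.
- move=> x xI; apply: differentiable_continuous; apply/derivable1_diffP.
  have : 0 < x by apply: le_lt_trans a0 _; rewrite (itvP xI).
  by move/dg0 => [].
- apply: cvg_at_left_filter; apply: differentiable_continuous.
  apply/derivable1_diffP.
  have : 0 < a + h by apply: le_lt_trans a0 ah.
  by move/dg0 => [].
have [c cI ->] := MVT ah D cont.
by exists c; [rewrite (itvP cI) | rewrite addrAC subrr add0r].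
Qed.

Lemma is_derive4 (f1 f2 f3 f4 : R -> R) (d1 d2 d3 d4 x : R) :
  is_derive x 1 f1 d1 -> is_derive x 1 f2 d2 ->
  is_derive x 1 f3 d3 -> is_derive x 1 f4 d4 ->
  is_derive x 1 (fun y => f1 y - f2 y - f3 y + f4 y) (d1 - d2 - d3 + d4).
Proof.
move=> H1 H2 H3 H4.
have := is_deriveD (is_deriveB (is_deriveB H1 H2) H3) H4.
by [].
Qed.

Lemma is_derive2 (f1 f2 : R -> R) (d1 d2 x : R) :
  is_derive x 1 f1 d1 -> is_derive x 1 f2 d2 ->
  is_derive x 1 (fun y => f1 y - f2 y) (d1 - d2).
Proof.
move=> H1 H2.
have := is_deriveB H1 H2.
by [].
Qed.

Lemma third_diff (F F1 F2 F3 : R -> R) (p r m e : R) :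
  0 <= p -> 0 < r -> 0 < m -> 0 < e ->
  (forall x : R, 0 < x -> is_derive x 1 F (F1 x)) ->
  (forall x : R, 0 < x -> is_derive x 1 F1 (F2 x)) ->
  (forall x : R, 0 < x -> is_derive x 1 F2 (F3 x)) ->
  F x @[x --> p^'+] --> F p ->
  exists2 c, 0 < c &
   F (p + r + m + e) - F (p + r + m) - F (p + r + e) - F (p + m + e)
   + F (p + r) + F (p + m) + F (p + e) - F p = F3 c * r * e * m.
Proof.
move=> p0 r0 m0 e0 dF dF1 dF2 Fp.
pose L y := F (y + (r + e)) - F (y + r) - F (y + e) + F y.
pose dL y := F1 (y + (r + e)) - F1 (y + r) - F1 (y + e) + F1 y.
have dL0 : forall x : R, 0 < x -> is_derive x 1 L (dL x).
  move=> x x0; apply: is_derive4.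
  - by apply: is_derive_shiftF; apply: dF; rewrite addr_gt0 // addr_gt0.
  - by apply: is_derive_shiftF; apply: dF; rewrite addr_gt0.
  - by apply: is_derive_shiftF; apply: dF; rewrite addr_gt0.
  - exact: dF.
have cF : forall c x : R, 0 < x + c -> {for x, continuous (fun y => F (y + c))}.
  move=> c x xc; apply: differentiable_continuous; apply/derivable1_diffP.
  by have [] := is_derive_shiftF (dF _ xc).
have Lp : L x @[x --> p^'+] --> L p.
  have -> : L = (fun y => F (y + (r + e))) - (fun y => F (y + r))
                - (fun y => F (y + e)) + F.
    by apply/funext => y.
  apply: cvgD; last exact: Fp.
  apply: cvgB; [apply: cvgB|]; apply: cvg_at_right_filter; apply: cF.
  - lra.
  - lra.
  - lra.
have [c1 pc1 E1] := mvt_ge0 p0 m0 dL0 Lp.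
have c10 : 0 < c1 by apply: le_lt_trans p0 pc1.
pose M y := F1 (y + r) - F1 y.
pose dM y := F2 (y + r) - F2 y.
have dM0 : forall x : R, 0 < x -> is_derive x 1 M (dM x).
  move=> x x0; apply: is_derive2; last exact: dF1.
  by apply: is_derive_shiftF; apply: dF1; rewrite addr_gt0.
have [c2 c12 E2] := mvt0 c10 e0 dM0.
have c20 : 0 < c2 by apply: lt_trans c10 c12.
have [c3 c23 E3] := mvt0 c20 r0 dF2.
exists c3; first by apply: lt_trans c20 c23.
have -> : F3 c3 * r * e * m = (F2 (c2 + r) - F2 c2) * e * m by rewrite E3.
have -> : (F2 (c2 + r) - F2 c2) * e * m = (M (c1 + e) - M c1) * m.
  by rewrite E2.
have -> : (M (c1 + e) - M c1) * m = dL c1 * m.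
  rewrite /M /dL (_ : c1 + e + r = c1 + (r + e)); last by ring.
  ring.
rewrite -E1 /L.
have -> : p + m + (r + e) = p + r + m + e by ring.
have -> : p + m + r = p + r + m by ring.
rewrite (_ : p + (r + e) = p + r + e); last by ring.
ring.
Qed.

Local Notation sfbm_cov' := (@sfbm_cov R).

Lemma dpowZ (k b y : R) : 0 < y ->
  is_derive y 1 (fun z => k * z `^ b) (k * (b * y `^ (b - 1))).
Proof.
move=> y0; have := is_deriveZ k (is_derive1_powR b y0).
by [].
Qed.

Lemma g_formula (K u v s t : R) : 0 < K -> 0 <= u -> u < v -> v <= s -> s < t ->
  exists2 X, 0 < X &
  sfbm_cov' K v t - sfbm_cov' K v s - sfbm_cov' K u t + sfbm_cov' K u s
  = - 2^-1 * ((2 * K) * (2 * K - 1) * (2 * K - 1 - 1) * X).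
Proof.
move=> K0 u0 uv vs st.
set a := 2 * K.
have a0 : 0 < a by rewrite /a mulr_gt0.
pose F z := z `^ a.
pose F1 z := a * z `^ (a - 1).
pose F2 z := (a * (a - 1)) * z `^ (a - 1 - 1).
pose F3 z := (a * (a - 1) * (a - 1 - 1)) * z `^ (a - 1 - 1 - 1).
have dF : forall x : R, 0 < x -> is_derive x 1 F (F1 x).
  move=> x x0; exact: (is_derive1_powR a x0).
have dF1 : forall x : R, 0 < x -> is_derive x 1 F1 (F2 x).
  move=> x x0; have := dpowZ a (a - 1) x0.
  by rewrite /F2 mulrA.
have dF2 : forall x : R, 0 < x -> is_derive x 1 F2 (F3 x).
  move=> x x0; have := dpowZ (a * (a - 1)) (a - 1 - 1) x0.
  by rewrite /F3 mulrA.
have Fp : forall p, 0 <= p -> F x @[x --> p^'+] --> F p.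
  move=> p; rewrite le_eqVlt => /predU1P[<-|p0].
    rewrite /F powR0; last by rewrite gt_eqF.
    exact: powR_cvg0.
  apply: cvg_at_right_filter; apply: differentiable_continuous.
  by apply/derivable1_diffP; have [] := dF _ p0.
have p0 : 0 <= s - v by rewrite subr_ge0.
have r0 : 0 < t - s by rewrite subr_gt0.
have m0 : 0 < u + v by lra.
have e0 : 0 < v - u by rewrite subr_gt0.
have [c c0 E] := third_diff p0 r0 m0 e0 dF dF1 dF2 (Fp _ p0).
exists (c `^ (a - 1 - 1 - 1) * (t - s) * (v - u) * (u + v)).
  by apply: mulr_gt0 => //; apply: mulr_gt0 => //; apply: mulr_gt0 => //; exact: powR_gt0.
rewrite (_ : a * (a - 1) * (a - 1 - 1) *
   (c `^ (a - 1 - 1 - 1) * (t - s) * (v - u) * (u + v)) = F3 c * (t - s) * (v - u) * (u + v)); last by rewrite /F3; ring.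
rewrite -E.
have e1 : s - v + (t - s) + (u + v) + (v - u) = v + t by ring.
have e2 : s - v + (t - s) + (u + v) = u + t by ring.
have e3 : s - v + (t - s) + (v - u) = t - u by ring.
have e4 : s - v + (u + v) + (v - u) = v + s by ring.
have e5 : s - v + (t - s) = t - v by ring.
have e6 : s - v + (u + v) = u + s by ring.
have e7 : s - v + (v - u) = s - u by ring.
rewrite e1 e2 e3 e4 e5 e6 e7 /F /sfbm_cov' -/a.
rewrite (ger0_norm p0) (@ger0_norm _ (t - v)); last by lra.
rewrite (@ger0_norm _ (t - u)); last by lra.
rewrite (@ger0_norm _ (s - u)); last by lra.
ring.
Qed.

Lemma g_sign (K u v s t : R) : 0 < K < 1 -> 0 <= u -> u < v -> v <= s -> s < t ->
  [/\ K = 2^-1 ->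
     sfbm_cov' K v t - sfbm_cov' K v s - sfbm_cov' K u t + sfbm_cov' K u s = 0,
     2^-1 < K ->
     0 < sfbm_cov' K v t - sfbm_cov' K v s - sfbm_cov' K u t + sfbm_cov' K u s
   & K < 2^-1 ->
     sfbm_cov' K v t - sfbm_cov' K v s - sfbm_cov' K u t + sfbm_cov' K u s < 0].
Proof.
move=> /andP[K0 K1] u0 uv vs st.
have [X X0 ->] := g_formula K0 u0 uv vs st.
split.
- move=> ->; rewrite (_ : 2 * 2^-1 - 1 = 0 :> R); first by rewrite mulr0 !mul0r mulr0.
  by rewrite divff ?subrr // pnatr_eq0.
- move=> Kh.
  have h1 : 0 < (2 * K) * (2 * K - 1) by apply: mulr_gt0; lra.
  have h2 : (2 * K) * (2 * K - 1) * (2 * K - 1 - 1) < 0.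
    by rewrite pmulr_rlt0 //; lra.
  have h3 : (2 * K) * (2 * K - 1) * (2 * K - 1 - 1) * X < 0.
    by rewrite pmulr_llt0.
  move: h3; set Y := _ * X; lra.
- move=> Kh.
  have h1 : (2 * K) * (2 * K - 1) < 0 by rewrite pmulr_rlt0; lra.
  have h2 : 0 < (2 * K) * (2 * K - 1) * (2 * K - 1 - 1).
    by rewrite nmulr_rgt0 //; lra.
  have h3 : 0 < (2 * K) * (2 * K - 1) * (2 * K - 1 - 1) * X.
    by rewrite mulr_gt0.
  move: h3; set Y := _ * X; lra.
Qed.

End realpart.

Section pair.
Context d (T : measurableType d) (R : realType) (P : probability T R).

Lemma pair_indep (N : nat) (xi : 'I_N -> R -> {RV P >-> R}) :
  independent_processes P (fun i t => (xi i t : T -> R)) ->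
  forall i j, i != j -> forall p q : R, 0 <= p -> 0 <= q ->
  forall A B, measurable A -> measurable B ->
  P (xi i p @^-1` A `&` xi j q @^-1` B) =
  (P (xi i p @^-1` A) * P (xi j q @^-1` B))%E.
Proof.
move=> ind i j ij p q p0 q0 A B mA mB.
pose ts k := if k == i then [:: p] else if k == j then [:: q] else [::].
pose BB (k : 'I_N) (n : nat) := if k == i then A else B.
have ji : (j == i) = false by apply/negbTE; rewrite eq_sym.
pose S k := \bigcap_(n in `I_(size (ts k)))
   ((fun i t => (xi i t : T -> R)) k (nth 0 (ts k) n) @^-1` BB k n).
have Si : S i = xi i p @^-1` A.
  by rewrite /S /ts eqxx /= II1 bigcap_set1 /BB eqxx.
have Sj : S j = xi j q @^-1` B.
  by rewrite /S /ts ji eqxx /= II1 bigcap_set1 /BB ji.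
have Sk : forall k, k != i -> k != j -> S k = setT.
  by move=> k ki kj; rewrite /S /ts (negbTE ki) (negbTE kj) /= II0 bigcap_set0.
have Cap : \bigcap_(k in [set: 'I_N]) S k = xi i p @^-1` A `&` xi j q @^-1` B.
  apply/seteqP; split => w /=.
    move=> H; split; [have := H i I; rewrite Si | have := H j I; rewrite Sj];
      by [].
  move=> [wA wB] k _.
  have [->|ki] := eqVneq k i; first by rewrite Si.
  have [->|kj] := eqVneq k j; first by rewrite Sj.
  by rewrite Sk.
have H1 : forall k, all (fun t => 0 <= t) (ts k).
  by move=> k; rewrite /ts; case: ifP => _ /=; rewrite ?p0 //; case: ifP => _ /=; rewrite ?q0.
have H2 : forall k n, measurable (BB k n).
  by move=> k n; rewrite /BB; case: ifP.
have := ind ts BB H1 H2.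
rewrite -/S Cap.
rewrite (eq_bigr (fun k => fine (P (S k)))) // => E.
rewrite (bigD1 i) //= (bigD1 j) //= in E.
rewrite big1 in E; last first.
  by move=> k /andP[ki kj]; rewrite Sk // probability_setT.
rewrite mulr1 Si Sj in E.
have mI : measurable (xi i p @^-1` A `&` xi j q @^-1` B).
  by apply: measurableI; exact: measurable_funPTI.
rewrite -(fineK (fin_num_measure P _ mI)) E EFinM.
rewrite !fineK //; apply: fin_num_measure; try exact: measurable_funPTI.
by rewrite ji.
Qed.
End pair.

Section covs.
Context d (T : measurableType d) (R : realType) (P : probability T R).

Let Pfin : (P setT \is a fin_num)%E. Proof. exact: fin_num_measure. Qed.

Lemma Lfun2_sum (I : Type) (r : seq I) (F : I -> T -> R) :
  (forall i, F i \in Lfun P 2%:E) -> (\sum_(i <- r) F i) \in Lfun P 2%:E.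
Proof.
move=> F2; elim: r => [|i r IH].
  by rewrite big_nil (_ : 0 = cst 0) // Lfun_cst.
by rewrite big_cons rpredD ?lee1n.
Qed.

Lemma cov_suml (I : Type) (r : seq I) (F : I -> T -> R) (Y : T -> R) :
  (forall i, F i \in Lfun P 2%:E) -> Y \in Lfun P 2%:E ->
  covariance P (\sum_(i <- r) F i) Y = (\sum_(i <- r) covariance P (F i) Y)%E.
Proof.
move=> F2 Y2; elim: r => [|i r IH].
  rewrite !big_nil (_ : 0 = cst 0) ?covariance_cst_l //.
have S2 := Lfun2_sum r F2.
by rewrite !big_cons -IH covarianceDl.
Qed.

Lemma cov_sumr (I : Type) (r : seq I) (F : I -> T -> R) (X : T -> R) :
  (forall i, F i \in Lfun P 2%:E) -> X \in Lfun P 2%:E ->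
  covariance P X (\sum_(i <- r) F i) = (\sum_(i <- r) covariance P X (F i))%E.
Proof.
move=> F2 X2; rewrite covarianceC cov_suml //.
by apply: eq_bigr => i _; rewrite covarianceC.
Qed.

Lemma cov_ZB (a b : R) (X1 X2 Y1 Y2 : T -> R) :
  X1 \in Lfun P 2%:E -> X2 \in Lfun P 2%:E ->
  Y1 \in Lfun P 2%:E -> Y2 \in Lfun P 2%:E ->
  covariance P (a \o* (X1 \- X2)) (b \o* (Y1 \- Y2)) =
  ((a * b)%:E * (covariance P X1 Y1 - covariance P X1 Y2
      - (covariance P X2 Y1 - covariance P X2 Y2)))%E.
Proof.
move=> hX1 hX2 hY1 hY2.
have hX : (X1 \- X2) \in Lfun P 2%:E by rewrite rpredB ?lee1n.
have hY : (Y1 \- Y2) \in Lfun P 2%:E by rewrite rpredB ?lee1n.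
have hbY : (b \o* (Y1 \- Y2)) \in Lfun P 2%:E by apply: Lfun_scale; rewrite ?ler1n.
rewrite covarianceZl; last 3 first.
- exact: Lfun_subset12.
- exact: Lfun_subset12.
- exact: Lfun2_mul_Lfun1.
rewrite covarianceZr; last 3 first.
- exact: Lfun_subset12.
- exact: Lfun_subset12.
- exact: Lfun2_mul_Lfun1.
by rewrite covarianceBl // covarianceBr // covarianceBr // muleA EFinM.
Qed.

Lemma cov_indep0 (X Y : {RV P >-> R}) :
  (forall A B, measurable A -> measurable B ->
     P (X @^-1` A `&` Y @^-1` B) = (P (X @^-1` A) * P (Y @^-1` B))%E) ->
  (X : T -> R) \in Lfun P 2%:E -> (Y : T -> R) \in Lfun P 2%:E ->
  covariance P X Y = 0%E.
Proof.
move=> ind X2 Y2.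
have X1 := Lfun_subset12 Pfin X2.
have Y1 := Lfun_subset12 Pfin Y2.
have XY1 := Lfun2_mul_Lfun1 X2 Y2.
rewrite covarianceE //.
rewrite (indep_expectationM ind X1 Y1 XY1).
by rewrite subee // fin_numM // expectation_fin_num.
Qed.

End covs.

Unset Implicit Arguments.

Theorem corollary7 (d : measure_display) (T : measurableType d) (R : realType)
  (P : probability T R) (N : nat) (H : 'I_N -> R) (a : 'I_N -> R)
  (xi : 'I_N -> R -> {RV P >-> R}) :
  (1 <= N)%N ->
  (forall i, 0 < H i < 1) ->
  (exists i, a i != 0) ->
  (forall i, is_sfbm P (H i) (xi i)) ->
  independent_processes P (fun i t => (xi i t : T -> R)) ->
  forall u v s t : R, 0 <= u -> u < v -> v <= s -> s < t ->
    [/\ (forall i, H i = 2^-1) -> msfbm_incr_cov P a xi u v s t = 0%E,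
        (forall i, 2^-1 < H i) -> (0 < msfbm_incr_cov P a xi u v s t)%E
      & (forall i, H i < 2^-1) -> (msfbm_incr_cov P a xi u v s t < 0)%E].
Proof.
move=> N1 H01 [k ak] sf ind u v s t u0 uv vs st.
have hL2 : forall i p, 0 <= p -> (xi i p : T -> R) \in Lfun P 2%:E.
  by move=> i p p0; case: (sf i) => _ _ h _ _; exact: h.
have cov_same : forall i p q, 0 <= p -> 0 <= q ->
    covariance P (xi i p) (xi i q) = (sfbm_cov (H i) p q)%:E.
  by move=> i p q p0 q0; case: (sf i) => _ _ _ _ h; exact: h.
have cov_diff : forall i j p q, i != j -> 0 <= p -> 0 <= q ->
    covariance P (xi i p) (xi j q) = 0%E.
  move=> i j p q ij p0 q0; apply: cov_indep0; last 2 first.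
  - exact: hL2.
  - exact: hL2.
  by move=> A B mA mB; exact: (pair_indep ind ij p0 q0 mA mB).
have v0 : 0 <= v by lra.
have s0 : 0 <= s by lra.
have t0 : 0 <= t by lra.
pose F i := a i \o* ((xi i v : T -> R) \- xi i u).
pose G j := a j \o* ((xi j t : T -> R) \- xi j s).
have eqF : (msfbm P a xi v \- msfbm P a xi u)%R = \sum_(i < N) F i.
  apply/funext => w; rewrite fct_sumE /msfbm /= -sumrB.
  by apply: eq_bigr => i _; rewrite /F /=; ring.
have eqG : (msfbm P a xi t \- msfbm P a xi s)%R = \sum_(i < N) G i.
  apply/funext => w; rewrite fct_sumE /msfbm /= -sumrB.
  by apply: eq_bigr => i _; rewrite /G /=; ring.
have FL2 : forall i, F i \in Lfun P 2%:E.
  move=> i; apply: Lfun_scale; first lra.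
  have hv := hL2 i v v0; have hu := hL2 i u u0.
  by rewrite rpredB ?lee1n.
have GL2 : forall i, G i \in Lfun P 2%:E.
  move=> i; apply: Lfun_scale; first lra.
  have hv := hL2 i t t0; have hu := hL2 i s s0.
  by rewrite rpredB ?lee1n.
pose g i := sfbm_cov (H i) v t - sfbm_cov (H i) v s
   - sfbm_cov (H i) u t + sfbm_cov (H i) u s.
have Cg : msfbm_incr_cov P a xi u v s t = (\sum_(i < N) (a i * a i * g i))%:E.
  rewrite /msfbm_incr_cov eqF eqG cov_suml //; last exact: Lfun2_sum.
  rewrite -sumEFin; apply: eq_bigr => i _.
  rewrite cov_sumr //.
  rewrite (bigD1 i) //= big1 ?adde0.
    rewrite /F /G cov_ZB ?hL2 // !cov_same //.
    by rewrite -!EFinB -EFinM /g; congr EFin; ring.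
  move=> j ji; rewrite /F /G cov_ZB ?hL2 // !cov_diff //; last 4 first.
  - by rewrite eq_sym.
  - by rewrite eq_sym.
  - by rewrite eq_sym.
  - by rewrite eq_sym.
  by rewrite oppe0 !adde0 oppe0 adde0 mule0.
have gs : forall i, [/\ H i = 2^-1 -> g i = 0, 2^-1 < H i -> 0 < g i
                      & H i < 2^-1 -> g i < 0].
  move=> i; exact: (g_sign (H01 i) u0 uv vs st).
have ak2 : 0 < a k * a k by rewrite -expr2 exprn_even_gt0.
rewrite Cg; split.
- move=> Hh; rewrite big1 // => i _.
  by case: (gs i) => h _ _; rewrite h ?mulr0.
- move=> Hh; rewrite lte_fin (bigD1 k) //=.
  have h1 : 0 < a k * a k * g k.
    by apply: mulr_gt0 => //; case: (gs k) => _ h _; exact: h.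
  have h2 : 0 <= \sum_(i < N | i != k) a i * a i * g i.
    apply: sumr_ge0 => i _; apply: mulr_ge0; first by rewrite -expr2 sqr_ge0.
    by case: (gs i) => _ h _; exact/ltW/h.
  lra.
- move=> Hh; rewrite lte_fin (bigD1 k) //=.
  have h1 : a k * a k * g k < 0.
    by rewrite pmulr_rlt0 //; case: (gs k) => _ _ h; exact: h.
  have h2 : \sum_(i < N | i != k) a i * a i * g i <= 0.
    apply: sumr_le0 => i _; apply: mulr_ge0_le0; first by rewrite -expr2 sqr_ge0.
    by case: (gs i) => _ _ h; exact/ltW/h.
  lra.
Qed.
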